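(* Let $N\ge2$ and let $W\in C^2((-\infty,1])$ satisfy $W(0)=0$, $W\ge0$, $W''\ge0$ on $(-\infty,1]\setminus\{0\}$. For $\varepsilon>0$ let $f_\varepsilon:[0,1]\to[0,1]$ be the radial profile and $f_\varepsilon^{-1}:[0,1]\to[0,1]$ its inverse. Then: (i) for $0<\tilde\varepsilon\le\varepsilon$, $f_\varepsilon(\varepsilon r)\ge f_{\tilde\varepsilon}(\tilde\varepsilon r)$ for $0<r<1/\varepsilon$; (ii) if $W'(1)>0$ and $t_0:=\sup\{0\le t<1: W(t)=0\}$, then $t_0<1$, $\lim_{\varepsilon\to0}\frac{f_\varepsilon^{-1}(\sqrt{1-t_0})}{\varepsilon}=\infty$, and for every $\delta\in(0,1-t_0)$, $\lim_{\varepsilon\to0}\frac{f_\varepsilon^{-1}(\sqrt{1-t_0-\delta})}{\varepsilon}\in(0,\infty)$. In particular, for every $a>0$ there is $\varepsilon_a>0$ such that $f_\varepsilon^2\le1-t_0$ on $[0,a\varepsilon]$ for all $\varepsilon\in(0,\varepsilon_a]$, and for every $\delta\in(0,1-t_0)$ there is $C_\delta>0$ such that $1-t_0-\delta\le f_\varepsilon^2$ on $[C_\delta\varepsilon,1]$ for all $\varepsilon\in(0,1/C_\delta]$.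
   Context: $f_\varepsilon$ is the unique solution of $f''+\frac{N-1}rf'-\frac{N-1}{r^2}f=-\frac1{\varepsilon^2}W'(1-f^2)f$ in $(0,1)$, $f(1)=1$, with $r^{\frac{N-1}2}f',r^{\frac{N-3}2}f\in L^2(0,1)$; it satisfies $f_\varepsilon(0)=0$ and is increasing from $[0,1]$ onto $[0,1]$. *)

(* Defs.v *)
From Stdlib Require Import Reals Lra.
From Coquelicot Require Import Coquelicot.
Open Scope R_scope.

(* W is C^2 on (-oo,1], with first and second derivatives W1, W2.
   Derivatives are genuine at every x < 1; at the endpoint 1 we require
   left-continuity of W, W1, W2 (so W1 1 is the left derivative of W at 1,
   W2 1 that of W1, by the mean value theorem). *)
Definition C2_upto1 (W W1 W2 : R -> R) : Prop :=
  (forall x, x < 1 ->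
     is_derive W x (W1 x) /\ is_derive W1 x (W2 x) /\ continuous W2 x) /\
  filterlim W (at_left 1) (locally (W 1)) /\
  filterlim W1 (at_left 1) (locally (W1 1)) /\
  filterlim W2 (at_left 1) (locally (W2 1)).

Definition W_hyp (W W1 W2 : R -> R) : Prop :=
  C2_upto1 W W1 W2 /\ W 0 = 0 /\
  (forall x, x <= 1 -> 0 <= W x) /\
  (forall x, x <= 1 -> x <> 0 -> 0 <= W2 x).

(* f is the radial profile f_eps on [0,1] (with the properties stated in the
   context): classical solution of
     f'' + (N-1)/r f' - (N-1)/r^2 f = -(1/eps^2) W'(1-f^2) f  on (0,1),
   f(1) = 1, r^((N-1)/2) f' and r^((N-3)/2) f in L^2(0,1)
   (expressed as convergence of the improper integrals of the nonnegative
   continuous integrands r^(N-1) f'^2 and r^(N-1) f^2 / r^2 on (0,1)),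
   f(0) = 0, and f strictly increasing on [0,1]. *)
Definition radial_profile (N : nat) (W1 : R -> R) (eps : R) (f : R -> R) : Prop :=
  (forall r, 0 < r < 1 ->
     ex_derive f r /\ ex_derive (Derive f) r /\
     Derive (Derive f) r + (INR N - 1) / r * Derive f r
       - (INR N - 1) / r ^ 2 * f r
     = - (1 / eps ^ 2) * W1 (1 - f r ^ 2) * f r) /\
  f 1 = 1 /\
  ex_RInt_gen (fun r => r ^ (N - 1) * (Derive f r) ^ 2) (at_right 0) (at_left 1) /\
  ex_RInt_gen (fun r => r ^ (N - 1) / r ^ 2 * (f r) ^ 2) (at_right 0) (at_left 1) /\
  f 0 = 0 /\
  (forall x y, 0 <= x -> x < y -> y <= 1 -> f x < f y).

Definition inverse01 (f g : R -> R) : Prop :=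
  (forall x, 0 <= x <= 1 -> g (f x) = x) /\
  (forall y, 0 <= y <= 1 -> 0 <= g y <= 1 /\ f (g y) = y).

(* Main.v *)
Require Import Defs.
From Stdlib Require Import Reals Lra Lia Classical.
From Coquelicot Require Import Coquelicot.
Open Scope R_scope.

Implicit Types (f g : R -> R) (x a b l : R).

Lemma D_eq f x a b : is_derive f x a -> a = b -> is_derive f x b.
Proof. intros H ->; exact H. Qed.

Lemma D_plus f g x a b : is_derive f x a -> is_derive g x b ->
  is_derive (fun t => f t + g t) x (a + b).
Proof. intros; apply (is_derive_plus f g); auto. Qed.

Lemma D_minus f g x a b : is_derive f x a -> is_derive g x b ->
  is_derive (fun t => f t - g t) x (a - b).
Proof. intros; apply (is_derive_minus f g); auto. Qed.

Lemma D_mult f g x a b : is_derive f x a -> is_derive g x b ->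
  is_derive (fun t => f t * g t) x (a * g x + f x * b).
Proof. intros; apply (is_derive_mult f g); auto. intros; apply Rmult_comm. Qed.

Lemma D_div f g x a b : is_derive f x a -> is_derive g x b -> g x <> 0 ->
  is_derive (fun t => f t / g t) x ((a * g x - f x * b) / g x ^ 2).
Proof. intros; apply is_derive_div; auto. Qed.

Lemma D_id x : is_derive (fun t => t) x 1.
Proof. apply (is_derive_id (K:=R_AbsRing)). Qed.

Lemma D_const (c : R) x : is_derive (fun _ => c) x 0.
Proof. apply (is_derive_const (K:=R_AbsRing) c). Qed.

Lemma D_pow k x : is_derive (fun t => t ^ k) x (INR k * x ^ (pred k)).
Proof. eapply D_eq. apply (is_derive_pow (fun t => t) k x 1). apply D_id. simpl; ring. Qed.

Lemma D_comp_lin f x c l : is_derive f (c * x) l ->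
  is_derive (fun t => f (c * t)) x (c * l).
Proof. intros H. eapply D_eq. apply (is_derive_comp f (fun t => c * t)). exact H.
  eapply D_eq. apply (is_derive_scal (fun t => t)). apply D_id. reflexivity.
  rewrite Rmult_1_r. reflexivity. Qed.

Lemma D_atan f x l : is_derive f x l ->
  is_derive (fun t => atan (f t)) x (l / (1 + f x ^ 2)).
Proof. intros H. eapply D_eq. apply (is_derive_comp atan f). apply is_derive_atan. exact H.
  change (scal l (/ (1 + (f x)²)) = l / (1 + f x ^ 2)).
  unfold scal; simpl; unfold mult; simpl. unfold Rsqr, Rdiv. rewrite Rmult_1_r. reflexivity. Qed.

Lemma D_cont f x l : is_derive f x l -> continuity_pt f x.
Proof. intros H. apply continuity_pt_filterlim. apply (ex_derive_continuous f). exists l; exact H. Qed.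

Lemma cont_ed g x : continuity_pt g x -> forall e, 0 < e -> exists d, 0 < d /\
  forall y, Rabs (y - x) < d -> Rabs (g y - g x) < e.
Proof. intros H e He. destruct (H e He) as [d [Hd H2]]. exists d; split; auto.
  intros y Hy. destruct (Req_dec y x) as [->|Hne]. rewrite Rminus_eq_0, Rabs_R0; auto.
  apply (H2 y). split. split. exact I. auto. exact Hy. Qed.

Lemma D_ed f x l : is_derive f x l -> forall e, 0 < e -> exists d, 0 < d /\
  forall y, Rabs (y - x) < d -> Rabs (f y - f x) < e.
Proof. intros H; apply cont_ed; eapply D_cont; eauto. Qed.

Lemma mvt (g dg : R -> R) a b : a < b ->
  (forall x, a <= x <= b -> is_derive g x (dg x)) ->
  exists c, a <= c <= b /\ g b - g a = dg c * (b - a).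
Proof. intros Hab H.
  destruct (MVT_gen g a b dg) as [c [Hc Heq]].
  - intros x Hx. rewrite Rmin_left, Rmax_right in Hx by lra. apply H; lra.
  - intros x Hx. rewrite Rmin_left, Rmax_right in Hx by lra. eapply D_cont; apply H; lra.
  - rewrite Rmin_left, Rmax_right in Hc by lra. exists c; auto.
Qed.

Lemma mono_le (g dg : R -> R) a b : a <= b ->
  (forall x, a <= x <= b -> is_derive g x (dg x) /\ 0 <= dg x) -> g a <= g b.
Proof. intros Hab H. destruct (Req_dec a b) as [->|]. lra.
  destruct (mvt g dg a b) as [c [Hc E]]. lra. intros; apply H; auto.
  destruct (H c Hc). nra. Qed.

Lemma deriv_neg g x l : is_derive g x l -> l < 0 ->
  exists d, 0 < d /\ forall h, 0 < h < d -> g (x + h) < g x /\ g x < g (x - h).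
Proof. intros H Hl. apply is_derive_Reals in H.
  destruct (H (- l / 2)) as [d Hd]. lra.
  exists d; split. apply cond_pos. intros h Hh.
  assert (A1 := Hd h). assert (A2 := Hd (- h)).
  assert (h <> 0) by lra. assert (- h <> 0) by lra.
  assert (Rabs h < d) by (rewrite Rabs_right; lra).
  assert (Rabs (-h) < d) by (rewrite Rabs_left; lra).
  specialize (A1 H0 H2). specialize (A2 H1 H3).
  apply Rabs_def2 in A1. apply Rabs_def2 in A2.
  destruct A1 as [A1 B1]. destruct A2 as [A2 B2].
  replace (x + - h) with (x - h) in A2, B2 by ring.
  split.
  - assert ((g (x + h) - g x) / h < 0) by lra.
    assert (g (x + h) - g x < 0). { apply (Rmult_lt_reg_r (/ h)). apply Rinv_0_lt_compat; lra. rewrite Rmult_0_l. exact H4. } lra.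
  - assert ((g (x - h) - g x) / - h < 0) by lra.
    assert ((g (x - h) - g x) * / - h < 0) by exact H4.
    rewrite <- Ropp_inv_permute in H5 by lra.
    assert (0 < (g (x - h) - g x) * / h) by lra.
    assert (0 < g (x - h) - g x). { apply (Rmult_lt_reg_r (/ h)). apply Rinv_0_lt_compat; lra. rewrite Rmult_0_l. exact H6. } lra.
Qed.

Lemma deriv_pos g x l : is_derive g x l -> 0 < l ->
  exists d, 0 < d /\ forall h, 0 < h < d -> g (x - h) < g x /\ g x < g (x + h).
Proof. intros H Hl. destruct (deriv_neg (fun t => - g t) x (- l)) as [d [Hd H2]].
  eapply D_eq. apply (is_derive_opp g). exact H. reflexivity. lra.
  exists d; split; auto. intros h Hh; destruct (H2 h Hh); lra. Qed.

Lemma lub_approx E m x : is_lub E m -> x < m -> exists t, E t /\ x < t.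
Proof. intros [H1 H2] Hx. apply NNPP. intros Hn.
  assert (is_upper_bound E x). { intros t Et. apply Rnot_lt_le. intros Hl. apply Hn. eauto. }
  specialize (H2 x H). lra. Qed.

Lemma at_left_ed g c l : filterlim g (at_left c) (locally l) ->
  forall e, 0 < e -> exists d, 0 < d /\ forall t, c - d < t < c -> Rabs (g t - l) < e.
Proof. intros H e He. apply (proj1 (filterlim_locally g l)) with (eps := mkposreal e He) in H.
  destruct H as [d Hd]. exists d. split. apply cond_pos. intros t Ht.
  apply (Hd t). simpl. unfold ball; simpl; unfold AbsRing_ball, abs, minus, plus, opp; simpl.
  rewrite Rabs_left by lra. lra. lra. Qed.

Section WF.
Variables (W W1 W2 : R -> R).
Hypothesis HW : W_hyp W W1 W2.

Lemma W_der x : x < 1 -> is_derive W x (W1 x).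
Proof. destruct HW as [[H _] _]. intros; apply H; auto. Qed.
Lemma W1_der x : x < 1 -> is_derive W1 x (W2 x).
Proof. destruct HW as [[H _] _]. intros; apply H; auto. Qed.
Lemma W_nonneg x : x <= 1 -> 0 <= W x.
Proof. destruct HW as [_ [_ [H _]]]. auto. Qed.
Lemma W_0 : W 0 = 0.
Proof. destruct HW as [_ [H _]]. auto. Qed.

Lemma W2_nonneg x : x < 1 -> 0 <= W2 x.
Proof. destruct HW as [[H [_ [_ _]]] [_ [_ H2]]]. intros Hx.
  destruct (Req_dec x 0) as [->|Hne]; [|apply H2; lra].
  apply Rnot_lt_le; intros Hn.
  destruct (H 0 ltac:(lra)) as [_ [_ Hc]].
  assert (Hc' : continuity_pt W2 0) by (apply continuity_pt_filterlim; exact Hc).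
  destruct (cont_ed W2 0 Hc' (- W2 0) ltac:(lra)) as [d [Hd Hd2]].
  assert (Hy := Hd2 (Rmin (d/2) (1/2))).
  assert (0 < Rmin (d/2) (1/2)) by (apply Rmin_glb_lt; lra).
  assert (Rmin (d/2) (1/2) <= d/2) by apply Rmin_l.
  assert (Rmin (d/2) (1/2) <= 1/2) by apply Rmin_r.
  rewrite Rminus_0_r, Rabs_right in Hy by lra. specialize (Hy ltac:(lra)).
  assert (0 <= W2 (Rmin (d/2) (1/2))) by (apply H2; lra).
  apply Rabs_def2 in Hy. lra. Qed.

Lemma W1_mono x y : x <= y <= 1 -> W1 x <= W1 y.
Proof. intros Hxy. destruct (Rlt_or_le y 1) as [Hy|Hy].
  - apply (mono_le W1 W2). lra. intros z Hz. split. apply W1_der; lra. apply W2_nonneg; lra.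
  - assert (y = 1) by lra. subst y. destruct (Req_dec x 1) as [->|Hx1]. lra.
    apply Rnot_lt_le; intros Hn.
    destruct HW as [[_ [_ [Hl _]]] _].
    destruct (at_left_ed W1 1 (W1 1) Hl (W1 x - W1 1) ltac:(lra)) as [d [Hd Hd2]].
    set (t := (Rmax x (1 - d/2) + 1)/2).
    assert (x <= Rmax x (1 - d/2)) by apply Rmax_l.
    assert (1 - d/2 <= Rmax x (1 - d/2)) by apply Rmax_r.
    assert (Rmax x (1 - d/2) < 1) by (apply Rmax_lub_lt; lra).
    assert (W1 x <= W1 t). { apply (mono_le W1 W2). unfold t; lra. intros z Hz. split. apply W1_der; unfold t in Hz; lra. apply W2_nonneg; unfold t in Hz; lra. }
    specialize (Hd2 t ltac:(unfold t; lra)). apply Rabs_def2 in Hd2. lra.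
Qed.

Lemma W1_0 : W1 0 = 0.
Proof. assert (HD := W_der 0 ltac:(lra)).
  destruct (Rtotal_order (W1 0) 0) as [Hn|[He|Hp]]; auto.
  - destruct (deriv_neg W 0 (W1 0) HD Hn) as [d [Hd H]].
    set (h := Rmin (d/2) 1). assert (h <= d/2) by apply Rmin_l. assert (h <= 1) by apply Rmin_r.
    assert (0 < h) by (apply Rmin_glb_lt; lra).
    destruct (H h ltac:(lra)) as [Ha _]. rewrite Rplus_0_l, W_0 in Ha.
    assert (0 <= W h) by (apply W_nonneg; lra). lra.
  - destruct (deriv_pos W 0 (W1 0) HD Hp) as [d [Hd H]].
    destruct (H (d/2) ltac:(lra)) as [Ha _]. rewrite W_0 in Ha.
    assert (0 <= W (0 - d/2)) by (apply W_nonneg; lra). lra.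
Qed.

Lemma W1_nonneg x : 0 <= x <= 1 -> 0 <= W1 x.
Proof. intros. rewrite <- W1_0. apply W1_mono; lra. Qed.

Variable t0 : R.
Hypothesis Hlub : is_lub (fun t => 0 <= t < 1 /\ W t = 0) t0.

Lemma t0_ge0 : 0 <= t0.
Proof. destruct Hlub as [H _]. apply H. split. lra. apply W_0. Qed.
Lemma t0_le1 : t0 <= 1.
Proof. destruct Hlub as [_ H]. apply H. intros t Ht; lra. Qed.

Lemma t0_lt1 : W1 1 > 0 -> t0 < 1.
Proof. intros Hp. destruct (Rlt_or_le t0 1) as [|Hge]; auto. exfalso.
  assert (t0 = 1) by (generalize t0_le1; lra). subst t0.
  destruct HW as [[_ [_ [Hl _]]] _].
  destruct (at_left_ed W1 1 (W1 1) Hl (W1 1) ltac:(lra)) as [d [Hd Hd2]].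
  destruct (lub_approx _ _ (1 - d) Hlub ltac:(lra)) as [t1 [[Ht1 E1] Ht1']].
  destruct (lub_approx _ _ t1 Hlub ltac:(lra)) as [t2 [[Ht2 E2] Ht2']].
  destruct (mvt W W1 t1 t2) as [c [Hc Heq]]. lra. intros; apply W_der; lra.
  assert (Hc2 := Hd2 c ltac:(lra)). apply Rabs_def2 in Hc2.
  rewrite E1, E2 in Heq. nra. Qed.

Lemma W1_zero x : t0 < 1 -> 0 < x <= t0 -> W1 x = 0.
Proof. intros Ht0 Hx.
  assert (0 <= W1 x) by (apply W1_nonneg; lra).
  destruct (Req_dec (W1 x) 0) as [|Hne]; auto. exfalso.
  destruct (D_ed W1 x (W2 x) (W1_der x ltac:(lra)) (W1 x) ltac:(lra)) as [d [Hd Hd2]].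
  set (x' := x - d/2).
  assert (Hpos : forall z, x' <= z < 1 -> 0 < W1 z).
  { intros z Hz. destruct (Rlt_or_le z x).
    - assert (Hz2 := Hd2 z). rewrite Rabs_left in Hz2 by lra. specialize (Hz2 ltac:(unfold x' in Hz; lra)).
      apply Rabs_def2 in Hz2. lra.
    - assert (W1 x <= W1 z) by (apply W1_mono; lra). lra. }
  destruct (lub_approx _ _ x' Hlub ltac:(unfold x'; lra)) as [t [[Ht Et] Ht']].
  destruct (mvt W W1 x' t) as [c [Hc Heq]]. lra. intros; apply W_der; lra.
  assert (0 < W1 c) by (apply Hpos; lra).
  assert (0 <= W x') by (apply W_nonneg; unfold x'; lra).
  rewrite Et in Heq. nra. Qed.

Lemma W1_pos v : t0 < v < 1 -> 0 < W1 v.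
Proof. intros Hv. assert (0 <= W1 v) by (apply W1_nonneg; generalize t0_ge0; lra).
  destruct (Req_dec (W1 v) 0) as [He|]; [|lra]. exfalso.
  assert (Hz : forall z, 0 <= z <= v -> W1 z = 0).
  { intros z Hz. assert (0 <= W1 z) by (apply W1_nonneg; lra).
    assert (W1 z <= W1 v) by (apply W1_mono; lra). lra. }
  assert (W v = 0).
  { assert (t0g := t0_ge0). destruct (mvt W W1 0 v) as [c [Hc Heq]]. lra. intros; apply W_der; lra.
    rewrite Hz in Heq by lra. rewrite W_0 in Heq. lra. }
  destruct Hlub as [Hu _]. assert (v <= t0). apply Hu. split; [generalize t0_ge0|]; lra. lra. Qed.

End WF.

Definition sol (N : nat) (W1 : R -> R) (T : R) (u du ddu : R -> R) : Prop :=
  forall s, 0 < s < T -> is_derive u s (du s) /\ is_derive du s (ddu s) /\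
    ddu s + (INR N - 1) / s * du s - (INR N - 1) / s ^ 2 * u s = - W1 (1 - u s ^ 2) * u s.

Lemma sol_sub N W1 T T' u du ddu : T' <= T -> sol N W1 T u du ddu -> sol N W1 T' u du ddu.
Proof. intros H S s Hs; apply S; lra. Qed.

Section Prof.
Variables (N : nat) (W1 : R -> R) (eps : R) (f finv : R -> R).
Hypothesis Heps : 0 < eps.
Hypothesis Hp : radial_profile N W1 eps f.
Hypothesis Hi : inverse01 f finv.

Lemma f_inc x y : 0 <= x -> x < y -> y <= 1 -> f x < f y.
Proof. destruct Hp as [_ [_ [_ [_ [_ H]]]]]. auto. Qed.
Lemma f_mono x y : 0 <= x -> x <= y -> y <= 1 -> f x <= f y.
Proof. intros. destruct (Req_dec x y) as [->|]. lra. left; apply f_inc; lra. Qed.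
Lemma f_0 : f 0 = 0.
Proof. destruct Hp as [_ [_ [_ [_ [H _]]]]]. auto. Qed.
Lemma f_1 : f 1 = 1.
Proof. destruct Hp as [_ [H _]]. auto. Qed.
Lemma f_range x : 0 <= x <= 1 -> 0 <= f x <= 1.
Proof. intros. rewrite <- f_0, <- f_1 at 1. split; apply f_mono; lra. Qed.
Lemma f_pos x : 0 < x <= 1 -> 0 < f x.
Proof. intros. rewrite <- f_0. apply f_inc; lra. Qed.
Lemma f_lt1 x : 0 <= x < 1 -> f x < 1.
Proof. intros. rewrite <- f_1. apply f_inc; lra. Qed.
Lemma finv_spec y : 0 <= y <= 1 -> 0 <= finv y <= 1 /\ f (finv y) = y.
Proof. destruct Hi as [_ H]. auto. Qed.
Lemma finv_f x : 0 <= x <= 1 -> finv (f x) = x.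
Proof. destruct Hi as [H _]. auto. Qed.
Lemma finv_range y : 0 < y < 1 -> 0 < finv y < 1.
Proof. intros Hy. destruct (finv_spec y ltac:(lra)) as [Ha Hb].
  split.
  - destruct (Req_dec (finv y) 0) as [E|]; [|lra]. rewrite E, f_0 in Hb. lra.
  - destruct (Req_dec (finv y) 1) as [E|]; [|lra]. rewrite E, f_1 in Hb. lra.
Qed.

Lemma f_lcont x : 0 < x <= 1 -> forall e, 0 < e -> exists d, 0 < d /\
  forall r, x - d < r <= x -> Rabs (f r - f x) < e.
Proof. intros Hx e He.
  assert (Hfx := f_pos x Hx).
  destruct (Rle_or_lt (f x) (e/2)) as [Hs|Hl].
  - exists x. split. lra. intros r Hr.
    assert (0 <= f r <= f x). { split. apply f_range; lra. apply f_mono; lra. }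
    rewrite Rabs_left1 by lra. lra.
  - assert (fx1 : f x <= 1) by (apply f_range; lra).
    destruct (finv_spec (f x - e/2) ltac:(lra)) as [Hr1 Hr2].
    assert (finv (f x - e/2) < x). { apply Rnot_le_lt; intros Hn. assert (f x <= f (finv (f x - e/2))) by (apply f_mono; lra). lra. }
    exists (x - finv (f x - e/2)). split. lra. intros r Hr.
    assert (f (finv (f x - e/2)) < f r) by (apply f_inc; lra).
    assert (f r <= f x) by (apply f_mono; lra).
    rewrite Rabs_left1 by lra. lra.
Qed.

Lemma f_ode r : 0 < r < 1 -> is_derive f r (Derive f r) /\
  is_derive (Derive f) r (Derive (Derive f) r) /\
  Derive (Derive f) r + (INR N - 1) / r * Derive f r - (INR N - 1) / r ^ 2 * f r
     = - (1 / eps ^ 2) * W1 (1 - f r ^ 2) * f r.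
Proof. destruct Hp as [H _]. intros Hr. destruct (H r Hr) as [A [B C]].
  split. apply Derive_correct; auto. split. apply Derive_correct; auto. auto. Qed.

Lemma Df_nonneg r : 0 < r < 1 -> 0 <= Derive f r.
Proof. intros Hr. destruct (f_ode r Hr) as [D _].
  apply Rnot_lt_le; intros Hn. destruct (deriv_neg f r _ D Hn) as [d [Hd H]].
  set (h := Rmin (d/2) ((1 - r)/2)).
  assert (h <= d/2) by apply Rmin_l. assert (h <= (1-r)/2) by apply Rmin_r.
  assert (0 < h) by (apply Rmin_glb_lt; lra).
  destruct (H h ltac:(lra)) as [Ha _].
  assert (f r < f (r + h)) by (apply f_inc; lra). lra. Qed.

Lemma rescale : sol N W1 (1 / eps) (fun s => f (eps * s))
  (fun s => eps * Derive f (eps * s)) (fun s => eps ^ 2 * Derive (Derive f) (eps * s)).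
Proof. intros s Hs.
  assert (Hr : 0 < eps * s < 1).
  { split. nra. assert (eps * s < eps * (1/eps)) by (apply Rmult_lt_compat_l; lra).
    replace (eps * (1/eps)) with 1 in H by (field; lra). lra. }
  destruct (f_ode _ Hr) as [A [B C]].
  split. apply D_comp_lin; auto.
  split. eapply D_eq. apply is_derive_scal. apply D_comp_lin. exact B. simpl; ring.
  set (r := eps * s) in *.
  assert (E : eps ^ 2 * Derive (Derive f) r + (INR N - 1) / s * (eps * Derive f r) -
    (INR N - 1) / s ^ 2 * f r = eps ^ 2 * (Derive (Derive f) r + (INR N - 1) / r * Derive f r - (INR N - 1) / r ^ 2 * f r)).
  { unfold r; field; lra. }
  rewrite E, C. field. lra.
Qed.

End Prof.

Lemma pow_le1 c n : 0 <= c <= 1 -> c ^ n <= 1.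
Proof. intros H; induction n; simpl. lra. assert (0 <= c ^ n) by (apply pow_le; lra). nra. Qed.

Lemma pow_le_self c n : 0 <= c <= 1 -> (1 <= n)%nat -> c ^ n <= c.
Proof. intros H Hn. destruct n. lia. simpl. assert (c ^ n <= 1) by (apply pow_le1; auto).
  assert (0 <= c ^ n) by (apply pow_le; lra). nra. Qed.

Definition lcont g x := forall e, 0 < e -> exists d, 0 < d /\
  forall y, x - d < y <= x -> Rabs (g y - g x) < e.

Lemma D_lcont g x l : is_derive g x l -> lcont g x.
Proof. intros H e He. destruct (D_ed g x l H e He) as [d [Hd H2]]. exists d; split; auto.
  intros y Hy. apply H2. apply Rabs_def1; lra. Qed.

Lemma dyadic (w : R -> R) (sg c : R) : (forall t, 0 < t -> 2 * t < sg -> c <= w (2 * t) - w t) ->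
  forall j t, 0 < t -> 2 ^ j * t < sg -> INR j * c <= w (2 ^ j * t) - w t.
Proof. intros H j. induction j; intros t Ht Hj.
  - simpl. replace (1 * t) with t by ring. lra.
  - rewrite S_INR. simpl in Hj |- *.
    assert (0 < 2 ^ j) by (apply pow_lt; lra).
    assert (IH := IHj t Ht ltac:(nra)).
    assert (H2 := H (2 ^ j * t) ltac:(nra) ltac:(nra)).
    replace (2 * 2 ^ j * t) with (2 * (2 ^ j * t)) by ring. lra.
Qed.

Section Cmp.
Variables (N : nat) (W1 : R -> R) (T : R).
Hypothesis HN : (2 <= N)%nat.
Hypothesis Hmono : forall x y, 0 <= x -> x <= y -> y <= 1 -> W1 x <= W1 y.
Hypothesis Hnn : forall x, 0 <= x <= 1 -> 0 <= W1 x.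
Hypothesis HT : 0 < T.

Let K := (N - 1)%nat.
Lemma K_INR : INR K = INR N - 1.
Proof. unfold K. rewrite minus_INR by lia. simpl; ring. Qed.
Lemma K_ge1 : (1 <= K)%nat.
Proof. unfold K; lia. Qed.
Lemma powK x : x ^ K = x * x ^ pred K.
Proof. assert (H := K_ge1). destruct K. lia. simpl. reflexivity. Qed.

Lemma P_der (w dw ddw : R -> R) : sol N W1 T w dw ddw -> forall t, 0 < t < T ->
  is_derive (fun t => t ^ K * dw t) t (t ^ K * ((INR N - 1) / t ^ 2 * w t - W1 (1 - w t ^ 2) * w t)).
Proof. intros S t Ht. destruct (S t Ht) as [A [B C]].
  eapply D_eq. apply D_mult. apply D_pow. exact B.
  assert (E : ddw t = - W1 (1 - w t ^ 2) * w t - (INR N - 1) / t * dw t + (INR N - 1) / t ^ 2 * w t) by (rewrite <- C; ring).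
  rewrite E, K_INR, powK. field. lra. Qed.

Lemma P_small (w dw ddw : R -> R) : sol N W1 T w dw ddw ->
  (forall s, 0 < s < T -> 0 <= w s <= 1) -> (forall s, 0 < s < T -> 0 <= dw s) ->
  forall eta, 0 < eta -> exists dl, 0 < dl /\ forall t, 0 < t < dl -> t ^ K * dw t < eta.
Proof. intros S Hw Hdw eta Heta.
  set (s0 := Rmin 1 (T/2)).
  assert (s0 <= 1) by apply Rmin_l. assert (s0 <= T/2) by apply Rmin_r.
  assert (0 < s0) by (apply Rmin_glb_lt; lra).
  set (M := W1 1). assert (HM : 0 <= M) by (apply Hnn; lra).
  assert (StepA : forall t s, 0 < t -> t < s -> s <= s0 -> t ^ K * dw t <= s ^ K * dw s + M * s).
  { intros t s Ht Hts Hs.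
    destruct (mvt (fun t => t ^ K * dw t) (fun t => t ^ K * ((INR N - 1) / t ^ 2 * w t - W1 (1 - w t ^ 2) * w t)) t s) as [c [Hc E]].
    lra. intros x Hx. apply (P_der w dw ddw); auto; lra.
    assert (0 <= w c <= 1) by (apply Hw; lra).
    assert (0 <= 1 - w c ^ 2 <= 1) by nra.
    assert (0 <= W1 (1 - w c ^ 2) <= M) by (split; [apply Hnn; lra| apply Hmono; lra]).
    assert (0 <= c ^ K <= 1) by (split; [apply pow_le; lra | apply pow_le1; lra]).
    assert (0 <= (INR N - 1) / c ^ 2 * w c).
    { apply Rmult_le_pos; [|lra]. apply Rdiv_le_0_compat. rewrite <- K_INR; apply pos_INR. apply pow_lt; lra. }
    assert (c ^ K * ((INR N - 1) / c ^ 2 * w c - W1 (1 - w c ^ 2) * w c) >= - M).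
    { assert (W1 (1 - w c ^ 2) * w c <= M) by nra. nra. }
    nra. }
  assert (StepB : forall sg, 0 < sg <= s0 -> exists s, 0 < s < sg /\ s ^ K * dw s < eta / 2).
  { intros sg Hsg. apply NNPP. intros Hn.
    assert (Hall : forall s, 0 < s < sg -> eta / 2 <= s ^ K * dw s).
    { intros s Hs. apply Rnot_lt_le. intros Hl. apply Hn. exists s. auto. }
    assert (Hd : forall t, 0 < t -> 2 * t < sg -> eta / 4 <= w (2 * t) - w t).
    { intros t Ht Ht2. destruct (mvt w dw t (2 * t)) as [c [Hc E]]. lra.
      intros x Hx. destruct (S x ltac:(lra)) as [A _]. exact A.
      assert (Hc1 := Hall c ltac:(lra)).
      assert (c ^ K <= c) by (apply pow_le_self; [lra| apply K_ge1]).
      assert (0 <= dw c) by (apply Hdw; lra).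
      assert (eta / 2 <= c * dw c) by nra.
      assert (eta / 2 <= 2 * t * dw c) by nra.
      replace (2 * t - t) with t in E by ring. nra. }
    destruct (INR_archimed (eta / 4) 1) as [m Hm]. lra.
    set (t := sg / 2 ^ (Nat.succ m)).
    assert (0 < 2 ^ m) by (apply pow_lt; lra).
    assert (Ht : 0 < t) by (unfold t; apply Rdiv_lt_0_compat; [lra| apply pow_lt; lra]).
    assert (E2 : 2 ^ m * t = sg / 2) by (unfold t; simpl; field; lra).
    assert (HH := dyadic w sg (eta / 4) Hd m t Ht ltac:(lra)).
    rewrite E2 in HH.
    assert (0 <= w (sg / 2) <= 1) by (apply Hw; lra).
    assert (t < sg). { assert (t * 2 ^ m = sg / 2) by lra. assert (1 <= 2 ^ m) by (apply pow_R1_Rle; lra). nra. }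
    assert (0 <= w t <= 1) by (apply Hw; lra).
    lra. }
  set (sg := Rmin s0 (eta / (2 * M + 2))).
  assert (sg <= s0) by apply Rmin_l. assert (sg <= eta / (2 * M + 2)) by apply Rmin_r.
  assert (0 < sg) by (apply Rmin_glb_lt; [lra| apply Rdiv_lt_0_compat; lra]).
  destruct (StepB sg ltac:(lra)) as [s [Hs Hps]].
  exists s. split. lra. intros t Ht.
  assert (HA := StepA t s ltac:(lra) ltac:(lra) ltac:(lra)).
  assert (M * s <= M * (eta / (2 * M + 2))) by (apply Rmult_le_compat_l; lra).
  assert (M * (eta / (2 * M + 2)) < eta / 2).
  { apply (Rmult_lt_reg_r (2 * M + 2)). lra. field_simplify; nra. }
  lra.
Qed.


Lemma Wr_der (u du ddu v dv ddv : R -> R) : sol N W1 T u du ddu -> sol N W1 T v dv ddv ->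
  forall x, 0 < x < T ->
  is_derive (fun s => s ^ K * (du s * v s - u s * dv s)) x
    (x ^ K * (u x * v x * (W1 (1 - v x ^ 2) - W1 (1 - u x ^ 2)))).
Proof. intros Su Sv x Hx. destruct (Su x Hx) as [A1 [B1 C1]]. destruct (Sv x Hx) as [A2 [B2 C2]].
  eapply D_eq. apply D_mult. apply D_pow. apply D_minus; apply D_mult; eauto.
  assert (E1 : ddu x = - W1 (1 - u x ^ 2) * u x - (INR N - 1) / x * du x + (INR N - 1) / x ^ 2 * u x) by (rewrite <- C1; ring).
  assert (E2 : ddv x = - W1 (1 - v x ^ 2) * v x - (INR N - 1) / x * dv x + (INR N - 1) / x ^ 2 * v x) by (rewrite <- C2; ring).
  rewrite E1, E2, K_INR, powK. field. lra. Qed.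

Lemma W1_cmp a b : 0 <= b -> b <= a -> a <= 1 -> W1 (1 - a ^ 2) <= W1 (1 - b ^ 2).
Proof. intros. apply Hmono; nra. Qed.

Variables (u du ddu v dv ddv : R -> R).
Hypothesis Su : sol N W1 T u du ddu.
Hypothesis Sv : sol N W1 T v dv ddv.
Hypothesis Hu : forall s, 0 < s <= T -> 0 <= u s <= 1.
Hypothesis Hv : forall s, 0 < s <= T -> 0 < v s <= 1.
Hypothesis Hdu : forall s, 0 < s < T -> 0 <= du s.
Hypothesis Hdv : forall s, 0 < s < T -> 0 <= dv s.
Hypothesis Hlu : lcont u T.
Hypothesis Hlv : lcont v T.
Hypothesis HuvT : u T <= v T.

Let Wr := fun s => s ^ K * (du s * v s - u s * dv s).

Lemma Wr_mono x y : 0 < x -> x <= y -> y < T -> (forall z, x <= z <= y -> v z <= u z) -> Wr x <= Wr y.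
Proof. intros Hx Hxy Hy Hz. apply (mono_le Wr (fun x => x ^ K * (u x * v x * (W1 (1 - v x ^ 2) - W1 (1 - u x ^ 2))))); auto.
  intros z Hzz. split. apply (Wr_der u du ddu v dv ddv); auto; lra.
  assert (0 <= u z <= 1) by (apply Hu; lra). assert (0 < v z <= 1) by (apply Hv; lra).
  assert (W1 (1 - u z ^ 2) <= W1 (1 - v z ^ 2)) by (apply W1_cmp; try lra; apply Hz; lra).
  assert (0 <= z ^ K) by (apply pow_le; lra).
  apply Rmult_le_pos; auto. apply Rmult_le_pos; nra. Qed.

Lemma d_cont g x : 0 < x < T -> (forall y, 0 < y < T -> exists l, is_derive g y l) ->
  forall e, 0 < e -> exists d, 0 < d /\ forall y, Rabs (y - x) < d -> Rabs (g y - g x) < e.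
Proof. intros Hx H e He. destruct (H x Hx) as [l Hl]. eapply D_ed; eauto. Qed.

Lemma u_dex y : 0 < y < T -> exists l, is_derive u y l.
Proof. intros Hy; exists (du y); apply Su; auto. Qed.
Lemma v_dex y : 0 < y < T -> exists l, is_derive v y l.
Proof. intros Hy; exists (dv y); apply Sv; auto. Qed.

Theorem compare : forall s, 0 < s < T -> u s <= v s.
Proof.
  intros ss Hss. apply Rnot_lt_le; intros Hgt.
  set (Ea := fun x => x = 0 \/ (0 < x <= ss /\ u x <= v x)).
  destruct (completeness Ea) as [a Ha].
  { exists ss. intros x [->|Hx]; lra. }
  { exists 0. left; auto. }
  assert (a0 : 0 <= a) by (apply Ha; left; auto).
  assert (a1 : a <= ss) by (apply Ha; intros x [->|Hx]; lra).
  assert (A1 : forall x, a < x <= ss -> v x < u x).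
  { intros x Hx. apply Rnot_le_lt; intros Hn. assert (x <= a) by (apply Ha; right; split; lra). lra. }
  set (Eb := fun x => ss <= - x <= T /\ u (- x) <= v (- x)).
  destruct (completeness Eb) as [m Hm].
  { exists (- ss). intros x Hx. unfold Eb in Hx. lra. }
  { exists (- T). unfold Eb. rewrite Ropp_involutive. split; auto. lra. }
  set (b := - m).
  assert (B0 : b <= T). { assert (- T <= m) by (apply Hm; unfold Eb; rewrite Ropp_involutive; split; auto; lra). unfold b; lra. }
  assert (B1 : ss <= b). { assert (m <= - ss) by (apply Hm; intros x Hx; unfold Eb in Hx; lra). unfold b; lra. }
  assert (B2 : forall x, ss <= x < b -> v x < u x).
  { intros x Hx. apply Rnot_le_lt; intros Hn. assert (- x <= m). apply Hm. unfold Eb. rewrite Ropp_involutive. split; auto; lra. unfold b in Hx; lra. }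
  assert (B3 : u b <= v b).
  { destruct (Req_dec b T) as [E|Hne]. rewrite E; auto.
    apply Rnot_lt_le; intros Hn.
    destruct (d_cont u b ltac:(lra) u_dex ((u b - v b)/2) ltac:(lra)) as [d1 [Hd1 H1']].
    destruct (d_cont v b ltac:(lra) v_dex ((u b - v b)/2) ltac:(lra)) as [d2 [Hd2 H2']].
    set (d := Rmin d1 d2). assert (d <= d1) by apply Rmin_l. assert (d <= d2) by apply Rmin_r.
    assert (0 < d) by (apply Rmin_glb_lt; lra).
    destruct (lub_approx Eb m (m - d) Hm ltac:(lra)) as [x' [Ex' Hx']].
    assert (x' <= m) by (apply Hm; auto).
    unfold Eb in Ex'. destruct Ex' as [_ Ex'].
    assert (Hy1 := H1' (- x') ltac:(apply Rabs_def1; unfold b; lra)).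
    assert (Hy2 := H2' (- x') ltac:(apply Rabs_def1; unfold b; lra)).
    apply Rabs_def2 in Hy1. apply Rabs_def2 in Hy2. lra. }
  assert (B4 : ss < b). { destruct (Req_dec ss b) as [E|]; [|lra]. rewrite <- E in B3. lra. }
  assert (AB : forall x, a < x < b -> v x < u x).
  { intros x Hx. destruct (Rle_or_lt x ss). apply A1; lra. apply B2; lra. }
  assert (WrNN : forall x, ss <= x < b -> 0 <= Wr x).
  { destruct (Req_dec a 0) as [Ea0|Ean].
    - intros x Hx. apply Rnot_lt_le; intros Hn.
      destruct (P_small v dv ddv Sv ltac:(intros s Hs; split; [|apply Hv]; (assert (0 < v s <= 1) by (apply Hv; lra)); lra) Hdv (- Wr x) ltac:(lra)) as [dl [Hdl Hdl2]].
      set (t := Rmin dl x / 2).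
      assert (Rmin dl x <= dl) by apply Rmin_l. assert (Rmin dl x <= x) by apply Rmin_r.
      assert (0 < Rmin dl x) by (apply Rmin_glb_lt; lra).
      assert (Wr t <= Wr x). { apply Wr_mono; unfold t; try lra. intros z Hz. left. apply AB; lra. }
      assert (Ht := Hdl2 t ltac:(unfold t; lra)).
      assert (0 <= u t <= 1) by (apply Hu; unfold t; lra).
      assert (0 < v t <= 1) by (apply Hv; unfold t; lra).
      assert (0 <= du t) by (apply Hdu; unfold t; lra).
      assert (0 <= dv t) by (apply Hdv; unfold t; lra).
      assert (0 <= t ^ K) by (apply pow_le; unfold t; lra).
      assert (- (t ^ K * dv t) <= Wr t). { unfold Wr. assert (0 <= t ^ K * du t * v t) by (apply Rmult_le_pos; [apply Rmult_le_pos|]; lra).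
        assert (0 <= t ^ K * dv t * (1 - u t)) by (apply Rmult_le_pos; [apply Rmult_le_pos|]; lra).
        assert (E : t ^ K * (du t * v t - u t * dv t) = t ^ K * du t * v t + t ^ K * dv t * (1 - u t) - t ^ K * dv t) by ring.
        rewrite E. lra. }
      lra.
    - assert (a0' : 0 < a) by lra.
      assert (ua : u a <= v a).
      { apply Rnot_lt_le; intros Hn.
        destruct (d_cont u a ltac:(lra) u_dex ((u a - v a)/2) ltac:(lra)) as [d1 [Hd1 H1']].
        destruct (d_cont v a ltac:(lra) v_dex ((u a - v a)/2) ltac:(lra)) as [d2 [Hd2 H2']].
        set (d := Rmin (Rmin d1 d2) a). assert (d <= Rmin d1 d2) by apply Rmin_l. assert (d <= a) by apply Rmin_r.
        assert (Rmin d1 d2 <= d1) by apply Rmin_l. assert (Rmin d1 d2 <= d2) by apply Rmin_r.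
        assert (0 < d) by (apply Rmin_glb_lt; [apply Rmin_glb_lt|]; lra).
        destruct (lub_approx Ea a (a - d) Ha ltac:(lra)) as [y [Ey Hy]].
        assert (y <= a) by (apply Ha; auto).
        destruct Ey as [Ey|[_ Ey]]. lra.
        assert (Hy1 := H1' y ltac:(apply Rabs_def1; lra)).
        assert (Hy2 := H2' y ltac:(apply Rabs_def1; lra)).
        apply Rabs_def2 in Hy1. apply Rabs_def2 in Hy2. lra. }
      assert (a2 : a < ss). { destruct (Req_dec a ss) as [E|]; [|lra]. rewrite E in ua. lra. }
      assert (ub : v a <= u a).
      { apply Rnot_lt_le; intros Hn.
        destruct (d_cont u a ltac:(lra) u_dex ((v a - u a)/2) ltac:(lra)) as [d1 [Hd1 H1']].
        destruct (d_cont v a ltac:(lra) v_dex ((v a - u a)/2) ltac:(lra)) as [d2 [Hd2 H2']].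
        set (d := Rmin (Rmin d1 d2) (ss - a)). assert (d <= Rmin d1 d2) by apply Rmin_l. assert (d <= ss - a) by apply Rmin_r.
        assert (Rmin d1 d2 <= d1) by apply Rmin_l. assert (Rmin d1 d2 <= d2) by apply Rmin_r.
        assert (0 < d) by (apply Rmin_glb_lt; [apply Rmin_glb_lt|]; lra).
        assert (Hy1 := H1' (a + d/2) ltac:(apply Rabs_def1; lra)).
        assert (Hy2 := H2' (a + d/2) ltac:(apply Rabs_def1; lra)).
        assert (v (a + d/2) < u (a + d/2)) by (apply A1; lra).
        apply Rabs_def2 in Hy1. apply Rabs_def2 in Hy2. lra. }
      assert (dd : dv a <= du a).
      { apply Rnot_lt_le; intros Hn.
        destruct (Su a ltac:(lra)) as [Da _]. destruct (Sv a ltac:(lra)) as [Db _].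
        destruct (deriv_neg (fun t => u t - v t) a (du a - dv a) ltac:(apply D_minus; auto) ltac:(lra)) as [d [Hd H']].
        set (h := Rmin (d/2) ((ss - a)/2)). assert (h <= d/2) by apply Rmin_l. assert (h <= (ss-a)/2) by apply Rmin_r.
        assert (0 < h) by (apply Rmin_glb_lt; lra).
        destruct (H' h ltac:(lra)) as [Hh _].
        assert (v (a + h) < u (a + h)) by (apply A1; lra). lra. }
      assert (Wa : 0 <= Wr a).
      { unfold Wr. assert (u a = v a) by lra. assert (0 < v a <= 1) by (apply Hv; lra).
        assert (0 <= a ^ K) by (apply pow_le; lra). rewrite H. 
        replace (du a * v a - v a * dv a) with (v a * (du a - dv a)) by ring.
        apply Rmult_le_pos; auto. apply Rmult_le_pos; lra. }
      intros x Hx. assert (Wr a <= Wr x).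
      { apply Wr_mono; try lra. intros z Hz. destruct (Req_dec z a) as [->|]. lra. left; apply AB; lra. }
      lra. }
  assert (Hvss : 0 < v ss <= 1) by (apply Hv; lra).
  set (rho := u ss / v ss).
  assert (Hrho : 1 < rho). { unfold rho. apply (Rmult_lt_reg_r (v ss)). lra. field_simplify; lra. }
  assert (Rat : forall x, ss <= x < b -> rho * v x <= u x).
  { intros x Hx. assert (Hvx : 0 < v x <= 1) by (apply Hv; lra).
    assert (u ss / v ss <= u x / v x).
    { destruct (Req_dec ss x) as [->|Hne]. lra.
      apply (mono_le (fun s => u s / v s) (fun s => Wr s / (s ^ K * v s ^ 2))). lra.
      intros z Hz. assert (0 < v z <= 1) by (apply Hv; lra). split.
      - eapply D_eq. apply D_div. exact (proj1 (Su z ltac:(lra))). exact (proj1 (Sv z ltac:(lra))). lra.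
        unfold Wr. field. split. lra. apply pow_nonzero; lra.
      - apply Rdiv_le_0_compat. apply WrNN; lra. apply Rmult_lt_0_compat. apply pow_lt; lra. nra. }
    unfold rho. replace (u x) with (u x / v x * v x) by (field; lra). nra. }
  assert (Lu : lcont u b). { destruct (Req_dec b T) as [->|]. auto. apply (D_lcont u b (du b)). apply Su. lra. }
  assert (Lv : lcont v b). { destruct (Req_dec b T) as [->|]. auto. apply (D_lcont v b (dv b)). apply Sv. lra. }
  assert (Hvb : 0 < v b <= 1) by (apply Hv; lra).
  assert (rho * v b <= u b).
  { apply Rnot_lt_le; intros Hn. set (gm := rho * v b - u b).
    destruct (Lu (gm / 2) ltac:(unfold gm; lra)) as [d1 [Hd1 H1']].
    destruct (Lv (gm / (2 * rho)) ltac:(unfold gm; apply Rdiv_lt_0_compat; lra)) as [d2 [Hd2 H2']].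
    set (d := Rmin (Rmin d1 d2) (b - ss)). assert (d <= Rmin d1 d2) by apply Rmin_l. assert (d <= b - ss) by apply Rmin_r.
    assert (Rmin d1 d2 <= d1) by apply Rmin_l. assert (Rmin d1 d2 <= d2) by apply Rmin_r.
    assert (0 < d) by (apply Rmin_glb_lt; [apply Rmin_glb_lt|]; lra).
    set (y := b - d / 2).
    assert (Hy1 := H1' y ltac:(unfold y; lra)). assert (Hy2 := H2' y ltac:(unfold y; lra)).
    assert (Ry := Rat y ltac:(unfold y; lra)).
    apply Rabs_def2 in Hy1. apply Rabs_def2 in Hy2.
    assert (rho * (gm / (2 * rho)) = gm / 2) by (field; lra).
    assert (rho * v y > rho * v b - gm / 2). { destruct Hy2. nra. }
    unfold gm in *; lra. }
  nra.
Qed.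

End Cmp.

Lemma INR_N1 N : (2 <= N)%nat -> 1 <= INR N - 1.
Proof. intros. apply le_INR in H. simpl in H. lra. Qed.

Lemma riccati N W1 T u du ddu y A :
  (2 <= N)%nat -> (forall x y, 0 <= x -> x <= y -> y <= 1 -> W1 x <= W1 y) ->
  sol N W1 T u du ddu -> 0 < A -> 2 * A < T ->
  (forall s, A <= s <= 2 * A -> 0 < u s <= y) -> 0 < y < 1 ->
  A ^ 2 * W1 (1 - y ^ 2) >= (INR N - 1) ^ 2 / 4 + (INR N - 1) / 2 + 16 -> False.
Proof.
  intros HN Hmono S HA HAT Hu Hy HAm.
  set (k := INR N - 1). set (m := W1 (1 - y ^ 2)). set (CN := k ^ 2 / 4 + k / 2).
  fold k m CN in HAm.
  assert (Hk : 1 <= k) by (apply INR_N1; auto).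
  set (q := m - CN / A ^ 2).
  assert (HqA : q * A ^ 2 >= 16) by (unfold q; field_simplify; [lra| lra]).
  assert (Hq : 0 < q) by nra.
  set (z := fun s => du s / u s + (k / 2) * / s).
  set (z' := fun s => (ddu s * u s - du s * du s) / u s ^ 2 + (k / 2) * (- 1 / s ^ 2)).
  assert (Dz : forall s, A <= s <= 2 * A -> is_derive z s (z' s)).
  { intros s Hs. destruct (S s ltac:(lra)) as [Da [Db _]]. assert (0 < u s) by (apply Hu; lra).
    unfold z, z'. apply D_plus. apply D_div; auto; lra.
    apply is_derive_scal. eapply D_eq. apply is_derive_inv. apply D_id. simpl; lra. simpl. field. lra. }
  assert (Zb : forall s, A <= s <= 2 * A -> z' s <= - (q + z s ^ 2)).
  { intros s Hs. destruct (S s ltac:(lra)) as [_ [_ C]]. destruct (Hu s Hs) as [Hu1 Hu2].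
    assert (E : ddu s = - W1 (1 - u s ^ 2) * u s - k / s * du s + k / s ^ 2 * u s) by (rewrite <- C; unfold k; ring).
    assert (E2 : z' s + (q + z s ^ 2) = (m - W1 (1 - u s ^ 2)) + (CN / s ^ 2 - CN / A ^ 2)).
    { unfold z', z, q, CN. rewrite E. field. split; lra. }
    assert (m <= W1 (1 - u s ^ 2)) by (apply Hmono; nra).
    assert (CN / s ^ 2 <= CN / A ^ 2).
    { apply Rmult_le_compat_l. unfold CN; nra. apply Rinv_le_contravar. nra. nra. }
    lra. }
  set (sq := sqrt q).
  assert (Hsq : 0 < sq) by (apply sqrt_lt_R0; lra).
  assert (Hsq2 : sq * sq = q) by (apply sqrt_sqrt; lra).
  set (U := fun s => atan (z s / sq)).
  set (U' := fun s => (z' s / sq) / (1 + (z s / sq) ^ 2)).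
  destruct (mvt U U' A (2 * A)) as [c [Hc E]]. lra.
  { intros x Hx. unfold U, U'. apply (D_atan (fun s => z s / sq)).
    eapply D_eq. apply (D_div z (fun _ => sq)). apply Dz; auto. apply D_const. lra. field. lra. }
  assert (HU' : U' c <= - sq).
  { unfold U'. assert (Zc := Zb c Hc).
    assert (E1 : 1 + (z c / sq) ^ 2 = (q + z c ^ 2) / q) by (rewrite <- Hsq2; field; lra).
    rewrite E1. assert (0 < q + z c ^ 2) by nra.
    apply (Rmult_le_reg_r ((q + z c ^ 2) / q)). apply Rdiv_lt_0_compat; lra.
    replace (z' c / sq / ((q + z c ^ 2) / q) * ((q + z c ^ 2) / q)) with (z' c / sq) by (field; lra).
    apply (Rmult_le_reg_r sq). lra.
    replace (z' c / sq * sq) with (z' c) by (field; lra).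
    replace (- sq * ((q + z c ^ 2) / q) * sq) with (- (q + z c ^ 2)) by (rewrite <- Hsq2; field; lra).
    lra. }
  assert (HsA : 4 <= sq * A).
  { apply Rnot_lt_le; intros Hn. assert (0 < sq * A) by nra.
    assert ((sq * A) * (sq * A) < 16) by nra. rewrite <- Hsq2 in HqA. nra. }
  assert (B1 := atan_bound (z A / sq)). assert (B2 := atan_bound (z (2 * A) / sq)).
  assert (PI <= 4) by apply PI_4.
  unfold U in E. replace (2 * A - A) with A in E by ring. nra.
Qed.

Lemma linreg N W1 T u du ddu c s1 :
  (2 <= N)%nat -> sol N W1 T u du ddu -> 0 < T ->
  (forall s, 0 < s < T -> 0 < u s < 1) ->
  (forall s t, 0 < s -> s <= t -> t < T -> u s <= u t) ->
  0 < s1 < T -> u s1 = c ->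
  (forall s, 0 < s < T -> c <= u s -> W1 (1 - u s ^ 2) = 0) -> c * T / 8 <= s1.
Proof.
  intros HN S HT Hu Hmon Hs1 Hc HW0. apply Rnot_lt_le; intros Hlt.
  set (k := INR N - 1). assert (Hk : 1 <= k) by (apply INR_N1; auto).
  assert (Hc01 : 0 < c < 1) by (rewrite <- Hc; apply Hu; auto).
  set (h := fun s => du s + k * (u s / s)).
  assert (Dh : forall s, 0 < s < T -> is_derive h s (- W1 (1 - u s ^ 2) * u s)).
  { intros s Hs. destruct (S s Hs) as [Da [Db C]]. unfold h. eapply D_eq. apply D_plus. exact Db.
    apply is_derive_scal. apply D_div. exact Da. apply D_id. lra. rewrite <- C. unfold k. field. lra. }
  assert (s1 < T / 8) by nra.
  assert (Hxi : forall xi, T / 4 <= xi <= T / 2 -> 4 * k / T < du xi).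
  { intros xi Hxi. destruct (mvt h (fun s => - W1 (1 - u s ^ 2) * u s) s1 xi) as [c' [Hc' E]]. lra.
    intros x Hx. apply Dh; lra.
    rewrite HW0 in E. 2: lra. 2: { rewrite <- Hc. apply Hmon; lra. }
    unfold h in E. rewrite Hc in E.
    assert (0 <= du s1). { apply Rnot_lt_le; intros Hn. destruct (S s1 Hs1) as [Da _].
      destruct (deriv_neg u s1 _ Da Hn) as [d [Hd H']].
      set (hh := Rmin (d/2) ((T - s1)/2)). assert (hh <= d/2) by apply Rmin_l. assert (hh <= (T-s1)/2) by apply Rmin_r.
      assert (0 < hh) by (apply Rmin_glb_lt; lra). destruct (H' hh ltac:(lra)) as [Hh _].
      assert (u s1 <= u (s1 + hh)) by (apply Hmon; lra). lra. }
    assert (8 / T < c / s1). { apply (Rmult_lt_reg_r (s1 * T)). nra. field_simplify; nra. }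
    assert (0 < u xi < 1) by (apply Hu; lra).
    assert (u xi / xi <= 4 / T). { apply (Rmult_le_reg_r (xi * T)). nra. field_simplify; nra. }
    assert (k * (c / s1) > k * (8 / T)) by nra.
    assert (k * (u xi / xi) <= k * (4 / T)) by nra.
    assert (E2 : du xi = du s1 + k * (c / s1) - k * (u xi / xi)) by lra.
    rewrite E2. assert (k * (8 / T) - k * (4 / T) = 4 * k / T) by (field; lra). lra. }
  destruct (mvt u du (T / 4) (T / 2)) as [xi [Hxi' E]]. lra. intros x Hx. apply S; lra.
  assert (Hd := Hxi xi Hxi').
  assert (0 < u (T / 2) < 1) by (apply Hu; lra). assert (0 < u (T / 4) < 1) by (apply Hu; lra).
  assert (du xi * (T / 2 - T / 4) > 4 * k / T * (T / 2 - T / 4)) by (apply Rmult_lt_compat_r; lra).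
  assert (4 * k / T * (T / 2 - T / 4) = k) by (field; lra).
  lra.
Qed.

Lemma ball_R (x d y : R) : ball x d y -> Rabs (y - x) < d.
Proof. intros H; exact H. Qed.

Lemma at_right0_intro (P : R -> Prop) d : 0 < d -> (forall y, 0 < y < d -> P y) -> at_right 0 P.
Proof. intros Hd H. exists (mkposreal d Hd). intros y Hy Hy0. apply ball_R in Hy. simpl in Hy.
  rewrite Rminus_0_r, Rabs_right in Hy by lra. apply H; lra. Qed.

Lemma lcont_scale g c T : 0 < c -> (forall e, 0 < e -> exists d, 0 < d /\
  forall r, c * T - d < r <= c * T -> Rabs (g r - g (c * T)) < e) -> lcont (fun s => g (c * s)) T.
Proof. intros Hc H e He. destruct (H e He) as [d [Hd H2]]. exists (d / c). split.
  apply Rdiv_lt_0_compat; lra. intros y Hy. apply H2. split.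
  assert (c * (T - d / c) < c * y) by (apply Rmult_lt_compat_l; lra).
  replace (c * (T - d / c)) with (c * T - d) in H0 by (field; lra). lra.
  apply Rmult_le_compat_l; lra. Qed.

Section Main.
Variables (N : nat) (W W1 W2 : R -> R) (f finv : R -> R -> R).
Hypothesis HN : (2 <= N)%nat.
Hypothesis HW : W_hyp W W1 W2.
Hypothesis Hprof : forall eps, 0 < eps -> radial_profile N W1 eps (f eps).
Hypothesis Hinv : forall eps, 0 < eps -> inverse01 (f eps) (finv eps).

Lemma Hmono01 x y : 0 <= x -> x <= y -> y <= 1 -> W1 x <= W1 y.
Proof. intros. apply (W1_mono W W1 W2 HW); lra. Qed.
Lemma Hnn01 x : 0 <= x <= 1 -> 0 <= W1 x.
Proof. apply (W1_nonneg W W1 W2 HW). Qed.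

Lemma part_i eps eps' r : 0 < eps' -> eps' <= eps -> 0 < r -> r < 1 / eps ->
  f eps' (eps' * r) <= f eps (eps * r).
Proof. intros He' Hee Hr HrT.
  assert (He : 0 < eps) by lra.
  assert (HT : 0 < 1 / eps) by (apply Rdiv_lt_0_compat; lra).
  assert (Hsc : forall s, 0 < s <= 1 / eps -> 0 < eps' * s <= eps * s /\ eps * s <= 1).
  { intros s Hs. split. split. nra. nra. assert (eps * s <= eps * (1 / eps)) by (apply Rmult_le_compat_l; lra).
    replace (eps * (1 / eps)) with 1 in H by (field; lra). lra. }
  apply (compare N W1 (1 / eps) HN Hmono01 Hnn01 HT
    (fun s => f eps' (eps' * s)) (fun s => eps' * Derive (f eps') (eps' * s)) (fun s => eps' ^ 2 * Derive (Derive (f eps')) (eps' * s))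
    (fun s => f eps (eps * s)) (fun s => eps * Derive (f eps) (eps * s)) (fun s => eps ^ 2 * Derive (Derive (f eps)) (eps * s))).
  - apply (sol_sub _ _ (1 / eps')). apply Rmult_le_compat_l. lra. apply Rinv_le_contravar; lra.
    apply rescale; auto.
  - apply rescale; auto.
  - intros s Hs. destruct (Hsc s Hs). apply (f_range N W1 eps' (f eps') (Hprof eps' He')). lra.
  - intros s Hs. destruct (Hsc s Hs). split. apply (f_pos N W1 eps (f eps) (Hprof eps He)). lra.
    apply (f_range N W1 eps (f eps) (Hprof eps He)). lra.
  - intros s Hs. destruct (Hsc s ltac:(lra)). assert (eps * s <> 1).
    { intros E. assert (s = 1 / eps) by (apply (Rmult_eq_reg_l eps); [rewrite E; field|]; lra). lra. }
    apply Rmult_le_pos. lra. apply (Df_nonneg N W1 eps' (f eps') (Hprof eps' He')). lra.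
  - intros s Hs. destruct (Hsc s ltac:(lra)). assert (eps * s <> 1).
    { intros E. assert (s = 1 / eps) by (apply (Rmult_eq_reg_l eps); [rewrite E; field|]; lra). lra. }
    apply Rmult_le_pos. lra. apply (Df_nonneg N W1 eps (f eps) (Hprof eps He)). lra.
  - apply lcont_scale; auto. destruct (Hsc (1 / eps) ltac:(lra)).
    apply (f_lcont N W1 eps' (f eps') (finv eps') (Hprof eps' He') (Hinv eps' He')). lra.
  - apply lcont_scale; auto. destruct (Hsc (1 / eps) ltac:(lra)).
    apply (f_lcont N W1 eps (f eps) (finv eps) (Hprof eps He) (Hinv eps He)). lra.
  - replace (eps * (1 / eps)) with 1 by (field; lra). rewrite (f_1 N W1 eps (f eps) (Hprof eps He)).
    destruct (Hsc (1 / eps) ltac:(lra)). apply (f_range N W1 eps' (f eps') (Hprof eps' He')). lra.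
  - lra.
Qed.


Section Two.
Hypothesis HW11 : W1 1 > 0.
Variable t0 : R.
Hypothesis Hlub : is_lub (fun t => 0 <= t < 1 /\ W t = 0) t0.

Lemma Ht0 : 0 <= t0 < 1.
Proof. split. apply (t0_ge0 W W1 W2 HW t0 Hlub). apply (t0_lt1 W W1 W2 HW t0 Hlub HW11). Qed.

Let c := sqrt (1 - t0).
Lemma c_facts : 0 < c <= 1 /\ c ^ 2 = 1 - t0.
Proof. assert (H := Ht0). assert (c * c = 1 - t0) by (apply sqrt_sqrt; lra).
  assert (0 < c) by (apply sqrt_lt_R0; lra). split. split. lra. nra. simpl; lra. Qed.

Lemma finv_c eps : 0 < eps -> c / 8 <= finv eps c.
Proof. intros He. destruct c_facts as [Hc Hc2]. assert (H := Ht0).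
  assert (Hp := Hprof eps He). assert (Hi := Hinv eps He).
  destruct (Req_dec t0 0) as [E|Hne].
  - assert (c = 1). { unfold c. rewrite E, Rminus_0_r. apply sqrt_1. }
    rewrite H0. rewrite <- (f_1 N W1 eps (f eps) Hp) at 2. rewrite (finv_f _ _ Hi) by lra. lra.
  - assert (Hc1 : c < 1) by nra.
    assert (HT : 0 < 1 / eps) by (apply Rdiv_lt_0_compat; lra).
    destruct (finv_range N W1 eps (f eps) (finv eps) Hp Hi c ltac:(lra)) as [F1 F2].
    destruct (finv_spec _ _ Hi c ltac:(lra)) as [_ F3].
    assert (Hsc : forall s, 0 < s < 1 / eps -> 0 < eps * s < 1).
    { intros s Hs. split. nra. assert (eps * s < eps * (1 / eps)) by (apply Rmult_lt_compat_l; lra).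
      replace (eps * (1 / eps)) with 1 in H0 by (field; lra). lra. }
    assert (L := linreg N W1 (1 / eps) (fun s => f eps (eps * s)) (fun s => eps * Derive (f eps) (eps * s))
      (fun s => eps ^ 2 * Derive (Derive (f eps)) (eps * s)) c (finv eps c / eps) HN (rescale N W1 eps (f eps) He Hp) HT).

    assert (c * (1 / eps) / 8 <= finv eps c / eps).
    { apply L.
      - intros s Hs. destruct (Hsc s Hs). split. apply (f_pos N W1 eps (f eps) Hp); lra. apply (f_lt1 N W1 eps (f eps) Hp); lra.
      - intros s t Hs Hst Ht. destruct (Hsc t ltac:(lra)). apply (f_mono N W1 eps (f eps) Hp); nra.
      - split. apply Rdiv_lt_0_compat; lra. unfold Rdiv. apply Rmult_lt_compat_r. apply Rinv_0_lt_compat; lra. lra.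
      - replace (eps * (finv eps c / eps)) with (finv eps c) by (field; lra). exact F3.
      - intros s Hs Hcs. destruct (Hsc s Hs). assert (f eps (eps * s) < 1) by (apply (f_lt1 N W1 eps (f eps) Hp); lra).
        apply (W1_zero W W1 W2 HW t0 Hlub). lra. split. nra. nra. }
    apply (Rmult_le_reg_r (/ eps)). apply Rinv_0_lt_compat; lra.
    replace (c / 8 * / eps) with (c * (1 / eps) / 8) by (field; lra). exact H0.
Qed.

Lemma claim2 : filterlim (fun eps => finv eps c / eps) (at_right 0) (Rbar_locally p_infty).
Proof. intros P [M HM]. destruct c_facts as [Hc _].
  set (d := c / (8 * (Rabs M + 1))).
  assert (Hd : 0 < d). { unfold d. apply Rdiv_lt_0_compat. lra. assert (0 <= Rabs M) by apply Rabs_pos. lra. }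
  apply (at_right0_intro _ d Hd). intros y Hy. apply HM.
  assert (H1 := finv_c y ltac:(lra)).
  assert (c / 8 / y <= finv y c / y) by (apply Rmult_le_compat_r; [left; apply Rinv_0_lt_compat|]; lra).
  assert (Rabs M + 1 < c / 8 / y).
  { apply (Rmult_lt_reg_r y). lra. replace (c / 8 / y * y) with (c / 8) by (field; lra).
    assert (y * (Rabs M + 1) < d * (Rabs M + 1)) by (apply Rmult_lt_compat_r; [generalize (Rabs_pos M)|]; lra).
    replace (d * (Rabs M + 1)) with (c / 8) in H0 by (unfold d; field; generalize (Rabs_pos M); lra). lra. }
  assert (M <= Rabs M) by apply Rle_abs. lra.
Qed.

Lemma claim4 a : 0 < a -> exists epsa, 0 < epsa /\
  forall eps r, 0 < eps <= epsa -> 0 <= r <= a * eps -> r <= 1 -> f eps r ^ 2 <= 1 - t0.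
Proof. intros Ha. destruct c_facts as [Hc Hc2]. exists (c / (8 * a)). split. apply Rdiv_lt_0_compat; lra.
  intros eps r He Hr Hr1. assert (Hp := Hprof eps ltac:(lra)). assert (Hi := Hinv eps ltac:(lra)).
  assert (H1 := finv_c eps ltac:(lra)).
  assert (a * eps <= a * (c / (8 * a))) by (apply Rmult_le_compat_l; lra).
  replace (a * (c / (8 * a))) with (c / 8) in H by (field; lra).
  destruct (finv_spec _ _ Hi c ltac:(lra)) as [F1 F2].
  assert (f eps r <= c). { rewrite <- F2. apply (f_mono N W1 eps (f eps) Hp); lra. }
  assert (0 <= f eps r) by (apply (f_range N W1 eps (f eps) Hp); lra).
  rewrite <- Hc2. nra.
Qed.

Variable delta : R.
Hypothesis Hdelta : 0 < delta < 1 - t0.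
Let y := sqrt (1 - t0 - delta).
Lemma y_facts : 0 < y < 1 /\ y ^ 2 = 1 - t0 - delta.
Proof. assert (H := Ht0). assert (y * y = 1 - t0 - delta) by (apply sqrt_sqrt; lra).
  assert (0 < y) by (apply sqrt_lt_R0; lra). split. split. lra. nra. simpl; lra. Qed.

Let m := W1 (1 - y ^ 2).
Lemma m_pos : 0 < m.
Proof. unfold m. destruct y_facts as [_ E]. rewrite E. assert (H := Ht0).
  apply (W1_pos W W1 W2 HW t0 Hlub). lra. Qed.

Let CN := (INR N - 1) ^ 2 / 4 + (INR N - 1) / 2.
Let A := (CN + 16) / m + 1.
Lemma A_facts : 1 <= A /\ A ^ 2 * m >= CN + 16.
Proof. assert (Hm := m_pos). assert (0 <= CN) by (unfold CN; assert (1 <= INR N - 1) by (apply INR_N1; auto); nra).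
  assert (0 <= (CN + 16) / m) by (apply Rdiv_le_0_compat; lra).
  split. unfold A; lra.
  assert (A * m = CN + 16 + m) by (unfold A; field; lra).
  assert (A ^ 2 * m >= A * m) by (simpl; nra). lra. Qed.

Lemma key5 eps : 0 < eps -> 2 * A * eps < 1 -> finv eps y < 2 * A * eps.
Proof. intros He H2. destruct y_facts as [Hy Hy2]. destruct A_facts as [HA HAm].
  assert (Hp := Hprof eps He). assert (Hi := Hinv eps He).
  destruct (finv_spec _ _ Hi y ltac:(lra)) as [F1 F2].
  apply Rnot_le_lt; intros Hn. exfalso.
  apply (riccati N W1 (1 / eps) (fun s => f eps (eps * s)) (fun s => eps * Derive (f eps) (eps * s))
      (fun s => eps ^ 2 * Derive (Derive (f eps)) (eps * s)) y A HN Hmono01 (rescale N W1 eps (f eps) He Hp)).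
  - lra.
  - apply (Rmult_lt_reg_l eps). lra. replace (eps * (1 / eps)) with 1 by (field; lra). lra.
  - intros s Hs. split. apply (f_pos N W1 eps (f eps) Hp); nra.
    rewrite <- F2. apply (f_mono N W1 eps (f eps) Hp); nra.
  - lra.
  - exact HAm.
Qed.

Lemma claim5 : exists C, 0 < C /\
  forall eps r, 0 < eps <= 1 / C -> C * eps <= r <= 1 -> 1 - t0 - delta <= f eps r ^ 2.
Proof. destruct y_facts as [Hy Hy2]. destruct A_facts as [HA HAm]. exists (2 * A). split. lra.
  intros eps r He Hr. assert (Hp := Hprof eps ltac:(lra)). assert (Hi := Hinv eps ltac:(lra)).
  assert (HCe : 2 * A * eps <= 1).
  { assert (2 * A * eps <= 2 * A * (1 / (2 * A))) by (apply Rmult_le_compat_l; lra).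
    replace (2 * A * (1 / (2 * A))) with 1 in H by (field; lra). lra. }
  destruct (Req_dec (2 * A * eps) 1) as [E|Hne].
  - assert (r = 1) by lra. subst r. rewrite (f_1 N W1 eps (f eps) Hp). assert (H := Ht0). lra.
  - assert (K := key5 eps ltac:(lra) ltac:(lra)).
    destruct (finv_spec _ _ Hi y ltac:(lra)) as [F1 F2].
    assert (y <= f eps r). { rewrite <- F2 at 1. apply (f_mono N W1 eps (f eps) Hp); lra. }
    rewrite <- Hy2. nra.
Qed.

Let phi := fun eps => finv eps y / eps.

Lemma phi_mono e1 e2 : 0 < e1 -> e1 <= e2 -> phi e2 <= phi e1.
Proof. intros H1 H12. destruct y_facts as [Hy Hy2].
  assert (Hp1 := Hprof e1 H1). assert (Hi1 := Hinv e1 H1).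
  assert (Hp2 := Hprof e2 ltac:(lra)). assert (Hi2 := Hinv e2 ltac:(lra)).
  destruct (finv_range N W1 e2 (f e2) (finv e2) Hp2 Hi2 y Hy) as [G1 G2].
  destruct (finv_range N W1 e1 (f e1) (finv e1) Hp1 Hi1 y Hy) as [G3 G4].
  destruct (finv_spec _ _ Hi2 y ltac:(lra)) as [_ F2].
  destruct (finv_spec _ _ Hi1 y ltac:(lra)) as [_ F1].
  unfold phi. set (s2 := finv e2 y / e2).
  assert (E2 : e2 * s2 = finv e2 y) by (unfold s2; field; lra).
  assert (Hs2 : 0 < s2) by (unfold s2; apply Rdiv_lt_0_compat; lra).
  assert (Hs2' : s2 < 1 / e2). { apply (Rmult_lt_reg_l e2). lra. rewrite E2. replace (e2 * (1 / e2)) with 1 by (field; lra). lra. }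
  assert (Hi := part_i e2 e1 s2 H1 H12 Hs2 Hs2'). rewrite E2, F2 in Hi.
  apply Rnot_lt_le; intros Hn.
  assert (finv e1 y < e1 * s2).
  { assert (e1 * (finv e1 y / e1) < e1 * s2) by (apply Rmult_lt_compat_l; lra).
    replace (e1 * (finv e1 y / e1)) with (finv e1 y) in H by (field; lra). lra. }
  assert (e1 * s2 <= e2 * s2) by (apply Rmult_le_compat_r; lra).
  assert (f e1 (finv e1 y) < f e1 (e1 * s2)) by (apply (f_inc N W1 e1 (f e1) Hp1); lra).
  lra.
Qed.

Lemma claim3 : exists L, 0 < L /\ filterlim phi (at_right 0) (locally L).
Proof. destruct y_facts as [Hy Hy2]. destruct A_facts as [HA HAm].
  set (e0 := 1 / (4 * A)). assert (He0 : 0 < e0) by (unfold e0; apply Rdiv_lt_0_compat; lra).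
  assert (Hb : forall eps, 0 < eps < e0 -> 0 < phi eps < 2 * A).
  { intros eps He. assert (2 * A * eps < 1).
    { assert (2 * A * eps < 2 * A * e0) by (apply Rmult_lt_compat_l; lra).
      unfold e0 in H. replace (2 * A * (1 / (4 * A))) with (1/2) in H by (field; lra). lra. }
    assert (K := key5 eps ltac:(lra) H).
    assert (Hp := Hprof eps ltac:(lra)). assert (Hi := Hinv eps ltac:(lra)).
    destruct (finv_range N W1 eps (f eps) (finv eps) Hp Hi y Hy) as [G1 G2].
    unfold phi. split. apply Rdiv_lt_0_compat; lra.
    apply (Rmult_lt_reg_r eps). lra. replace (finv eps y / eps * eps) with (finv eps y) by (field; lra). lra. }
  set (E := fun x => exists eps, 0 < eps < e0 /\ x = phi eps).
  destruct (completeness E) as [L HL].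
  { exists (2 * A). intros x [eps [He ->]]. destruct (Hb eps He); lra. }
  { exists (phi (e0 / 2)). exists (e0 / 2). split. lra. auto. }
  assert (HL0 : 0 < L). { assert (phi (e0/2) <= L) by (apply HL; exists (e0/2); split; [lra|auto]).
    destruct (Hb (e0/2) ltac:(lra)). lra. }
  exists L. split. auto.
  apply filterlim_locally. intros eta.
  destruct (lub_approx E L (L - eta) HL) as [x [[e1 [He1 ->]] Hx]]. generalize (cond_pos eta); lra.
  apply (at_right0_intro _ e1). lra. intros eps He.
  assert (phi e1 <= phi eps) by (apply phi_mono; lra).
  assert (phi eps <= L) by (apply HL; exists eps; split; [lra|auto]).
  unfold ball; simpl; unfold AbsRing_ball, abs, minus, plus, opp; simpl.
  apply Rabs_def1; lra.
Qed.

End Two.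

End Main.


Theorem propositionB1 (N : nat) (W W1 W2 : R -> R) (f finv : R -> R -> R) :
  (2 <= N)%nat ->
  W_hyp W W1 W2 ->
  (forall eps, 0 < eps -> radial_profile N W1 eps (f eps)) ->
  (forall eps, 0 < eps -> inverse01 (f eps) (finv eps)) ->
  (* (i) *)
  (forall eps eps' r, 0 < eps' -> eps' <= eps -> 0 < r -> r < 1 / eps ->
     f eps' (eps' * r) <= f eps (eps * r)) /\
  (* (ii) *)
  (W1 1 > 0 -> forall t0 : R,
     is_lub (fun t => 0 <= t < 1 /\ W t = 0) t0 ->
     t0 < 1 /\
     filterlim (fun eps => finv eps (sqrt (1 - t0)) / eps)
       (at_right 0) (Rbar_locally p_infty) /\
     (forall delta, 0 < delta < 1 - t0 ->
        exists L, 0 < L /\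
          filterlim (fun eps => finv eps (sqrt (1 - t0 - delta)) / eps)
            (at_right 0) (locally L)) /\
     (forall a, 0 < a -> exists epsa, 0 < epsa /\
        forall eps r, 0 < eps <= epsa -> 0 <= r <= a * eps -> r <= 1 ->
          f eps r ^ 2 <= 1 - t0) /\
     (forall delta, 0 < delta < 1 - t0 -> exists C, 0 < C /\
        forall eps r, 0 < eps <= 1 / C -> C * eps <= r <= 1 ->
          1 - t0 - delta <= f eps r ^ 2)).
Proof.
  intros HN HW Hprof Hinv. split.
  - intros eps eps' r H1 H2 H3 H4. exact (part_i N W W1 W2 f finv HN HW Hprof Hinv eps eps' r H1 H2 H3 H4).
  - intros HW11 t0 Hlub. split; [|split; [|split; [|split]]].
    + exact (proj2 (Ht0 W W1 W2 HW HW11 t0 Hlub)).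
    + exact (claim2 N W W1 W2 f finv HN HW Hprof Hinv HW11 t0 Hlub).
    + intros delta Hd. exact (claim3 N W W1 W2 f finv HN HW Hprof Hinv HW11 t0 Hlub delta Hd).
    + intros a Ha. exact (claim4 N W W1 W2 f finv HN HW Hprof Hinv HW11 t0 Hlub a Ha).
    + intros delta Hd. exact (claim5 N W W1 W2 f finv HN HW Hprof Hinv HW11 t0 Hlub delta Hd).
Qed.
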